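(* Let $n\ge1$ and on $\mathbb{D}^n$ (coordinates $\alpha_0,\dots,\alpha_{n-1}$) use the Poisson bracket described in the context. Let $\Phi_n,\Psi_n$ be the monic first and second kind orthogonal polynomials on the unit circle and $\Phi_n^*,\Psi_n^*$ their reversed polynomials. Then for all $z,w$: \[ \{\Phi_n(z),\Phi_n(w)\}=\{\Psi_n(z),\Psi_n(w)\}=\{\Phi_n^*(z),\Phi_n^*(w)\}=\{\Psi_n^*(z),\Psi_n^*(w)\}=0, \] \[ \{\Phi_n^*(z),\Psi_n^*(w)\}=-\frac{i}{2}\Bigl[\bigl(\Phi_n^*(z)\Psi_n^*(w)-\Psi_n^*(z)\Phi_n^*(w)\bigr)\frac{z+w}{z-w}-\Phi_n^*(z)\Phi_n^*(w)+\Psi_n^*(z)\Psi_n^*(w)\Bigr], \] \[ \{\Phi_n(z),\Psi_n(w)\}=-\frac{i}{2}\Bigl[\bigl(\Phi_n(z)\Psi_n(w)-\Psi_n(z)\Phi_n(w)\bigr)\frac{z+w}{z-w}+\Phi_n(z)\Phi_n(w)-\Psi_n(z)\Psi_n(w)\Bigr]. \]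
   Context: Let $\rho_j=(1-|\alpha_j|^2)^{1/2}$; the Poisson bracket is $\{f,g\}=\sum_{j=0}^{n-1}i\rho_j^2\bigl(\frac{\partial f}{\partial\bar\alpha_j}\frac{\partial g}{\partial\alpha_j}-\frac{\partial f}{\partial\alpha_j}\frac{\partial g}{\partial\bar\alpha_j}\bigr)$ (Wirtinger derivatives), i.e. $\{\alpha_j,\alpha_k\}=0$, $\{\alpha_j,\bar\alpha_k\}=-i\rho_j^2\delta_{jk}$; $z,w$ are held fixed. $\Phi_0=1$, $\Phi_{k+1}(z)=z\Phi_k(z)-\bar\alpha_k\Phi_k^*(z)$, $\Phi_k^*(z)=z^k\overline{\Phi_k(1/\bar z)}$; $\Psi_k$ satisfies the same recursion with each $\alpha_j$ replaced by $-\alpha_j$, and $\Psi_k^*(z)=z^k\overline{\Psi_k(1/\bar z)}$. The identities are identities of polynomials in $z,w$. *)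

(* Defs.v *)
From HB Require Import structures.
From mathcomp Require Import all_boot all_order all_algebra.
From mathcomp Require Import mpoly.
Set Implicit Arguments. Unset Strict Implicit. Unset Printing Implicit Defensive.
Import Order.TTheory GRing.Theory Num.Theory.
Local Open Scope ring_scope.

(* Formal setting: the coordinates alpha_0..alpha_{n-1} and their conjugates
   abar_0..abar_{n-1} are independent indeterminates of {mpoly C[n + n]}:
   alpha_j = 'X_(lshift n j), abar_j = 'X_(rshift n j).
   Wirtinger derivatives d/dalpha_j, d/dabar_j of polynomials in (alpha, abar)
   are the formal partial derivatives mderiv. *)
Section OPUC.
Variables (C : numClosedFieldType) (n : nat).

Local Notation M := {mpoly C[n + n]}.

Definition alpha (j : 'I_n) : M := 'X_(lshift n j).
Definition alphabar (j : 'I_n) : M := 'X_(rshift n j).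

Definition rho2 (j : 'I_n) : M := 1 - alpha j * alphabar j.

(* abar_k as a function of a natural index (only k < n is ever used). *)
Definition alphabar_nat (k : nat) : M :=
  match insub k with Some j => alphabar j | None => 0 end.

(* complex conjugation on M: conjugate coefficients and swap alpha_j <-> abar_j *)
Definition swap_idx (i : 'I_(n + n)) : 'I_(n + n) :=
  match split i with inl j => rshift n j | inr j => lshift n j end.
Definition mconj (p : M) : M :=
  mmap (fun c : C => (Num.conj c)%:MP) (fun i => 'X_(swap_idx i)) p.

(* reversed polynomial of degree k: p^*(z) = z^k * conj(p(1/conj z)) *)
Definition revstar (k : nat) (p : {poly M}) : {poly M} :=
  \poly_(i < k.+1) mconj p`_(k - i).

(* Szego recursion with Verblunsky coefficients s*alpha_k (s = 1 first kind,
   s = -1 second kind): P_{k+1} = z P_k - conj(s alpha_k) P_k^*. *)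
Fixpoint opuc (s : C) (k : nat) : {poly M} :=
  match k with
  | 0 => 1
  | k'.+1 => 'X * opuc s k' - (s%:MP * alphabar_nat k')%:P * revstar k' (opuc s k')
  end.

Definition Phi k := opuc 1 k.
Definition Psi k := opuc (-1) k.
Definition Phistar k := revstar k (Phi k).
Definition Psistar k := revstar k (Psi k).

Definition ev (p : {poly M}) (z : C) : M := p.[z%:MP].

Definition pbracket (f g : M) : M :=
  \sum_(j < n) ('i%:MP * rho2 j *
     (mderiv (rshift n j) f * mderiv (lshift n j) g
      - mderiv (lshift n j) f * mderiv (rshift n j) g)).

End OPUC.

(* Main.v *)
Require Import Defs.
From HB Require Import structures.
From mathcomp Require Import all_boot all_order all_algebra.
From mathcomp Require Import mpoly.
From mathcomp Require Import ring zify.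
Set Implicit Arguments. Unset Strict Implicit. Unset Printing Implicit Defensive.
Import Order.TTheory GRing.Theory Num.Theory.
Local Open Scope ring_scope.

Section Br.
Variables (C : numClosedFieldType) (n : nat).
Local Notation M := {mpoly C[n + n]}.

Definition pb (f g : M) : M :=
  \sum_(j < n) (rho2 C j *
     (mderiv (rshift n j) f * mderiv (lshift n j) g
      - mderiv (lshift n j) f * mderiv (rshift n j) g)).

Lemma pbracketE f g : pbracket f g = 'i%:MP * pb f g.
Proof. rewrite /pbracket /pb mulr_sumr; apply: eq_bigr => j _; ring. Qed.

Lemma pbDl f g h : pb (f + g) h = pb f h + pb g h.
Proof. rewrite /pb -big_split; apply: eq_bigr => j _ /=; rewrite !mderivD; ring. Qed.
Lemma pbDr f g h : pb h (f + g) = pb h f + pb h g.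
Proof. rewrite /pb -big_split; apply: eq_bigr => j _ /=; rewrite !mderivD; ring. Qed.
Lemma pbNl f g : pb (- f) g = - pb f g.
Proof. rewrite /pb -sumrN; apply: eq_bigr => j _ /=; rewrite !mderivN; ring. Qed.
Lemma pbNr f g : pb g (- f) = - pb g f.
Proof. rewrite /pb -sumrN; apply: eq_bigr => j _ /=; rewrite !mderivN; ring. Qed.
Lemma pbMl f g h : pb (f * g) h = f * pb g h + g * pb f h.
Proof.
rewrite /pb !mulr_sumr -big_split; apply: eq_bigr => j _ /=; rewrite !mderivM; ring.
Qed.
Lemma pbMr f g h : pb h (f * g) = f * pb h g + g * pb h f.
Proof.
rewrite /pb !mulr_sumr -big_split; apply: eq_bigr => j _ /=; rewrite !mderivM; ring.
Qed.
Lemma pbCl c g : pb c%:MP g = 0.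
Proof. rewrite /pb big1 // => j _; rewrite !mderivC; ring. Qed.
Lemma pbCr c g : pb g c%:MP = 0.
Proof. rewrite /pb big1 // => j _; rewrite !mderivC; ring. Qed.
Lemma pb1l g : pb 1 g = 0.
Proof. by rewrite -mpolyC1 pbCl. Qed.
Lemma pb1r g : pb g 1 = 0.
Proof. by rewrite -mpolyC1 pbCr. Qed.

Lemma mderivX1 (i k : 'I_(n + n)) : mderiv i ('X_k : M) = (k == i)%:R.
Proof.
rewrite mderivX mnm1E; case: eqP => [->|_]; last by rewrite scale0r.
have -> : (U_(i) - U_(i) = 0)%MM by apply/mnmP => l; rewrite !mnmE subnn.
by rewrite mpolyX0 scale1r.
Qed.

Definition vz (j : 'I_n) (f : M) := mderiv (lshift n j) f = 0 /\ mderiv (rshift n j) f = 0.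

Lemma vzD j f g : vz j f -> vz j g -> vz j (f + g).
Proof. by move=> [h1 h2] [h3 h4]; split; rewrite mderivD ?h1 ?h2 ?h3 ?h4 addr0. Qed.
Lemma vzN j f : vz j f -> vz j (- f).
Proof. by move=> [h1 h2]; split; rewrite mderivN ?h1 ?h2 oppr0. Qed.
Lemma vzM j f g : vz j f -> vz j g -> vz j (f * g).
Proof. by move=> [h1 h2] [h3 h4]; split; rewrite mderivM ?h1 ?h2 ?h3 ?h4 mul0r mulr0 addr0. Qed.
Lemma vzC j c : vz j c%:MP.
Proof. by split; rewrite mderivC. Qed.
Lemma vz1 j : vz j 1.
Proof. by rewrite -mpolyC1; apply: vzC. Qed.
Lemma vz_alpha j k : j != k -> vz j (alpha C k).
Proof.
move=> ne; split; rewrite /alpha mderivX1 ?eq_lshift ?eq_lrshift //.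
by rewrite eq_sym (negbTE ne).
Qed.
Lemma vz_alphabar j k : j != k -> vz j (alphabar C k).
Proof.
move=> ne; split; rewrite /alphabar mderivX1 ?eq_rshift ?eq_rlshift //.
by rewrite eq_sym (negbTE ne).
Qed.

Lemma pb0 f g : (forall j, vz j f \/ vz j g) -> pb f g = 0.
Proof.
move=> h; rewrite /pb big1 // => j _.
by case: (h j) => [[-> ->]|[-> ->]]; ring.
Qed.

Lemma pb_local (f g : M) (k : 'I_n) : (forall j, j != k -> vz j f) ->
  pb f g = rho2 C k *
     (mderiv (rshift n k) f * mderiv (lshift n k) g
      - mderiv (lshift n k) f * mderiv (rshift n k) g).
Proof.
move=> h; rewrite /pb (bigD1 k) //= big1 ?addr0 // => j ne.
by case: (h j ne) => -> ->; ring.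
Qed.

Lemma pb_ab k : pb (alpha C k) (alphabar C k) = - rho2 C k.
Proof.
rewrite (@pb_local _ _ k) => [|j]; last exact: vz_alpha.
rewrite /alpha /alphabar !mderivX1 !eq_lshift !eq_rshift eq_lrshift eq_rlshift eqxx /=.
ring.
Qed.
Lemma pb_ba k : pb (alphabar C k) (alpha C k) = rho2 C k.
Proof.
rewrite (@pb_local _ _ k) => [|j]; last exact: vz_alphabar.
rewrite /alpha /alphabar !mderivX1 !eq_lshift !eq_rshift eq_lrshift eq_rlshift eqxx /=.
ring.
Qed.
Lemma pb_aa k : pb (alpha C k) (alpha C k) = 0.
Proof.
rewrite (@pb_local _ _ k) => [|j]; last exact: vz_alpha.
rewrite /alpha !mderivX1 !eq_lshift ?eq_lrshift ?eq_rlshift eqxx /=; ring.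
Qed.
Lemma pb_bb k : pb (alphabar C k) (alphabar C k) = 0.
Proof.
rewrite (@pb_local _ _ k) => [|j]; last exact: vz_alphabar.
rewrite /alphabar !mderivX1 !eq_rshift ?eq_lrshift ?eq_rlshift eqxx /=; ring.
Qed.

Definition low (k : nat) (f : M) := forall j : 'I_n, (k <= j)%N -> vz j f.
Definition only (k : 'I_n) (f : M) := forall j, j != k -> vz j f.

Lemma pb_step (k : 'I_n) f1 f2 g1 g2 a1 a2 b1 b2 c q11 q12 q21 q22 :
  low k f1 -> low k f2 -> low k g1 -> low k g2 ->
  only k a1 -> only k a2 -> only k b1 -> only k b2 ->
  c * pb f1 g1 = q11 -> c * pb f1 g2 = q12 -> c * pb f2 g1 = q21 -> c * pb f2 g2 = q22 ->
  c * pb (a1 * f1 + a2 * f2) (b1 * g1 + b2 * g2) =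
    a1 * b1 * q11 + a1 * b2 * q12 + a2 * b1 * q21 + a2 * b2 * q22 +
    c * (f1 * g1 * pb a1 b1 + f1 * g2 * pb a1 b2 + f2 * g1 * pb a2 b1 + f2 * g2 * pb a2 b2).
Proof.
move=> lf1 lf2 lg1 lg2 oa1 oa2 ob1 ob2 <- <- <- <-.
have D (f a : M) : low k f -> only k a -> forall j, vz j f \/ vz j a.
  move=> lf oa j; case: (leqP k j) => [kj|jk]; first by left; apply: lf.
  by right; apply: oa; rewrite neq_ltn jk.
have D' (f a : M) : low k f -> only k a -> forall j, vz j a \/ vz j f.
  by move=> lf oa j; case: (D f a lf oa j); [right|left].
rewrite !(pbDl, pbDr, pbMl, pbMr).
rewrite !(pb0 (D _ _ lf1 ob1), pb0 (D _ _ lf1 ob2), pb0 (D _ _ lf2 ob1), pb0 (D _ _ lf2 ob2)).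
rewrite !(pb0 (D' _ _ lg1 oa1), pb0 (D' _ _ lg1 oa2), pb0 (D' _ _ lg2 oa1), pb0 (D' _ _ lg2 oa2)).
ring.
Qed.

End Br.

Section Conj.
Variables (C : numClosedFieldType) (n : nat).
Local Notation M := {mpoly C[n + n]}.

Definition cf : {rmorphism C -> M} := (@mpolyC (n + n) C \o Num.conj)%FUN.
Definition hx (i : 'I_(n + n)) : M := 'X_(swap_idx i).

Lemma mconjE (p : M) : mconj p = mmap cf hx p.
Proof. by []. Qed.

Lemma mconjD (p q : M) : mconj (p + q) = mconj p + mconj q.
Proof. by rewrite !mconjE rmorphD. Qed.
Lemma mconjN (p : M) : mconj (- p) = - mconj p.
Proof. by rewrite !mconjE rmorphN. Qed.
Lemma mconjB (p q : M) : mconj (p - q) = mconj p - mconj q.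
Proof. by rewrite !mconjE rmorphB. Qed.
Lemma mconjM (p q : M) : mconj (p * q) = mconj p * mconj q.
Proof. by rewrite !mconjE rmorphM. Qed.
Lemma mconj0 : mconj (0 : M) = 0.
Proof. by rewrite !mconjE rmorph0. Qed.
Lemma mconjC c : mconj (c%:MP : M) = (Num.conj c)%:MP.
Proof. by rewrite mconjE mmapC. Qed.
Lemma mconjX i : mconj ('X_i : M) = 'X_(swap_idx i).
Proof. by rewrite mconjE mmapX mmap1U. Qed.

Lemma split_l (j : 'I_n) : split (lshift n j) = inl j.
Proof. exact: (unsplitK (inl _ j)). Qed.
Lemma split_r (j : 'I_n) : split (rshift n j) = inr j.
Proof. exact: (unsplitK (inr _ j)). Qed.

Lemma swapK (i : 'I_(n + n)) : swap_idx (swap_idx i) = i.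
Proof.
rewrite -[i]splitK; case: (split i) => j /=; rewrite /swap_idx.
  by rewrite split_l split_r.
by rewrite split_r split_l.
Qed.

Lemma mconjK (p : M) : mconj (mconj p) = p.
Proof.
elim/mpolyind: p => [|c m p _ _ IH]; first by rewrite !mconj0.
rewrite !mconjD IH; congr (_ + _).
rewrite [mconj (c *: _)]mconjE mmapZ mmapX mconjM /mmap1 /= mconjC conjCK.
rewrite mconjE rmorph_prod /=.
rewrite (eq_bigr (fun i => 'X_i ^+ m i)); last first.
  by move=> i _; rewrite rmorphXn /= -mconjE /hx mconjX swapK.
by rewrite -mpolyXE_id mul_mpolyC.
Qed.

Lemma mconj_alpha (j : 'I_n) : mconj (alphabar C j) = alpha C j.
Proof. by rewrite /alphabar mconjX /swap_idx split_r. Qed.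

End Conj.

Section Rec.
Variables (C : numClosedFieldType) (n : nat).
Local Notation M := {mpoly C[n + n]}.

Lemma size_opuc s k : (size (@opuc C n s k) <= k.+1)%N.
Proof.
elim: k => [|k IH] /=; first by rewrite size_poly1.
apply/leq_sizeP => j hj; rewrite coefB coefXM coefCM coef_poly.
case: j hj => [//|j] hj /=; rewrite ltnNge (ltnW hj) /= mulr0 subr0.
by move/leq_sizeP: IH; apply.
Qed.

Lemma revstar_rec k (p : {poly M}) (c : M) : (size p <= k.+1)%N ->
  revstar k.+1 ('X * p - c%:P * revstar k p) = revstar k p - (mconj c)%:P * ('X * p).
Proof.
move=> sp; apply/polyP => i.
rewrite /revstar !(coef_poly, coefB, coefCM, coefXM).
case: (ltngtP i k.+1) => [ilt|igt|->].
- rewrite ltnS in ilt; rewrite ltnS (leq_trans ilt) //.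
  case: i ilt => [|i] ilt /=.
    by rewrite !subn0 ltnn /= !mulr0 !subr0.
  have e1 : (k.+1 - i.+1 = (k - i.+1).+1)%N by lia.
  rewrite e1 /=.
  have -> : ((k - i.+1).+1 < k.+1)%N by lia.
  have e2 : (k - (k - i.+1).+1 = i)%N by lia.
  rewrite e2.
  by rewrite mconjB mconjM mconjK.
- rewrite ltnNge igt /=.
  case: i igt => [//|i] igt /=.
  move/leq_sizeP: sp => ->; last by rewrite -ltnS.
  by rewrite mulr0 subr0.
- rewrite ltnSn subnn /= subn0 !sub0r mconjN mconjM mconjK.
  by [].
Qed.

End Rec.

Inductive fk := FX | FXs | FY | FYs.

Section Tab.
Variables (C : numClosedFieldType) (n : nat).
Local Notation M := {mpoly C[n + n]}.

Lemma alphabar_natE k (hk : (k < n)%N) : alphabar_nat C n k = alphabar C (Ordinal hk).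
Proof.
rewrite /alphabar_nat; case: insubP => [j _ hj|]; last by rewrite hk.
by congr alphabar; apply: val_inj.
Qed.

Lemma ev_opucS s k z : ev (@opuc C n s k.+1) z =
  z%:MP * ev (opuc n s k) z - (s%:MP * alphabar_nat C n k) * ev (revstar k (opuc n s k)) z.
Proof. by rewrite /ev /= hornerD hornerN !hornerM hornerX hornerC. Qed.

Lemma ev_revS s k z : ev (revstar k.+1 (@opuc C n s k.+1)) z =
  ev (revstar k (opuc n s k)) z - mconj (s%:MP * alphabar_nat C n k) * z%:MP * ev (opuc n s k) z.
Proof.
rewrite /= revstar_rec ?size_opuc //.
by rewrite /ev hornerD hornerN !hornerM hornerX hornerC mulrA.
Qed.

Definition Fv k t z : M :=
  match t with
  | FX => ev (Phi C n k) z | FXs => ev (Phistar C n k) z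
  | FY => ev (Psi C n k) z | FYs => ev (Psistar C n k) z
  end.

Definition cA (j : 'I_n) (t : fk) (z : C) : M * M :=
  match t with
  | FX => (z%:MP, - alphabar C j)
  | FXs => (- (alpha C j * z%:MP), 1)
  | FY => (z%:MP, alphabar C j)
  | FYs => (alpha C j * z%:MP, 1)
  end.
Definition s1 t := match t with FX | FXs => FX | _ => FY end.
Definition s2 t := match t with FX | FXs => FXs | _ => FYs end.

Lemma Fv_rec k (hk : (k < n)%N) t z :
  Fv k.+1 t z = (cA (Ordinal hk) t z).1 * Fv k (s1 t) z + (cA (Ordinal hk) t z).2 * Fv k (s2 t) z.
Proof.
have hc : mconj (alphabar_nat C n k) = alpha C (Ordinal hk).
  by rewrite alphabar_natE mconj_alpha.
case: t => /=; rewrite /Phi /Psi /Phistar /Psistar.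
- by rewrite ev_opucS alphabar_natE; ring.
- by rewrite ev_revS mconjM mconjC hc rmorph1; ring.
- by rewrite ev_opucS alphabar_natE; ring.
- by rewrite ev_revS mconjM mconjC hc rmorphN1; ring.
Qed.

Lemma revstar01 : revstar 0 (1 : {poly M}) = 1.
Proof.
apply/polyP => i; rewrite coef_poly coef1; case: i => [|i] /=.
  by rewrite ?coef1 /= mconjE rmorph1.
by rewrite coef1.
Qed.

Lemma Fv0 t z : Fv 0 t z = 1.
Proof.
by case: t; rewrite /= /Phistar /Psistar /Phi /Psi /= ?revstar01 /ev hornerC.
Qed.

Lemma only_cA (j : 'I_n) t z : only j (cA j t z).1 /\ only j (cA j t z).2.
Proof.
have a i : i != j -> vz i (alpha C j) by move=> h; apply: vz_alpha.
have b i : i != j -> vz i (alphabar C j) by move=> h; apply: vz_alphabar.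
by case: t; split => i h /=; rewrite ?vz1 //;
  repeat (apply: vzN || apply: vzM || apply: vzC || apply: a || apply: b || apply: vz1).
Qed.

Lemma low_Fv k : (k <= n)%N -> forall t z, low k (Fv k t z).
Proof.
elim: k => [_ t z|k IH hk t z]; first by rewrite Fv0 => i _; apply: vz1.
rewrite (Fv_rec hk) => i hi.
have [o1 o2] := only_cA (Ordinal hk) t z.
have ne : i != Ordinal hk by rewrite neq_ltn /= orbC hi.
have L t' : vz i (Fv k t' z) by apply: (IH (ltnW hk)); exact: ltnW.
by apply: vzD; apply: vzM; [apply: o1 | apply: L | apply: o2 | apply: L].
Qed.


Definition Q (t u : fk) (vz vw : fk -> M) (Z W : M) : M :=
  match t, u with
  | FX, FX => 0
  | FX, FXs => (2%:R * W) * (vz FX * vw FXs) + (- (2%:R * W)) * (vz FXs * vw FX)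
  | FX, FY => (- (1%:R * Z) + 1%:R * W) * (vz FX * vw FX) + (- (1%:R * Z) + - (1%:R * W)) * (vz FX * vw FY) + (1%:R * Z + 1%:R * W) * (vz FY * vw FX) + (1%:R * Z + - (1%:R * W)) * (vz FY * vw FY)
  | FX, FYs => (1%:R * Z + - (1%:R * W)) * (vz FX * vw FXs) + (- (1%:R * Z) + 1%:R * W) * (vz FX * vw FYs) + (2%:R * W) * (vz FXs * vw FY) + (- (1%:R * Z) + - (1%:R * W)) * (vz FY * vw FXs) + (1%:R * Z + - (1%:R * W)) * (vz FY * vw FYs)
  | FXs, FX => (- (2%:R * Z)) * (vz FX * vw FXs) + (2%:R * Z) * (vz FXs * vw FX)
  | FXs, FXs => 0
  | FXs, FY => (2%:R * Z) * (vz FX * vw FYs) + (- (1%:R * Z) + 1%:R * W) * (vz FXs * vw FX) + (1%:R * Z + - (1%:R * W)) * (vz FXs * vw FY) + (- (1%:R * Z) + - (1%:R * W)) * (vz FYs * vw FX) + (- (1%:R * Z) + 1%:R * W) * (vz FYs * vw FY)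
  | FXs, FYs => (1%:R * Z + - (1%:R * W)) * (vz FXs * vw FXs) + (- (1%:R * Z) + - (1%:R * W)) * (vz FXs * vw FYs) + (1%:R * Z + 1%:R * W) * (vz FYs * vw FXs) + (- (1%:R * Z) + 1%:R * W) * (vz FYs * vw FYs)
  | FY, FX => (1%:R * Z + - (1%:R * W)) * (vz FX * vw FX) + (1%:R * Z + 1%:R * W) * (vz FX * vw FY) + (- (1%:R * Z) + - (1%:R * W)) * (vz FY * vw FX) + (- (1%:R * Z) + 1%:R * W) * (vz FY * vw FY)
  | FY, FXs => (1%:R * Z + - (1%:R * W)) * (vz FX * vw FXs) + (- (1%:R * Z) + - (1%:R * W)) * (vz FX * vw FYs) + (- (1%:R * Z) + 1%:R * W) * (vz FY * vw FXs) + (1%:R * Z + - (1%:R * W)) * (vz FY * vw FYs) + (2%:R * W) * (vz FYs * vw FX)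
  | FY, FY => 0
  | FY, FYs => (2%:R * W) * (vz FY * vw FYs) + (- (2%:R * W)) * (vz FYs * vw FY)
  | FYs, FX => (- (1%:R * Z) + 1%:R * W) * (vz FXs * vw FX) + (- (1%:R * Z) + - (1%:R * W)) * (vz FXs * vw FY) + (2%:R * Z) * (vz FY * vw FXs) + (1%:R * Z + - (1%:R * W)) * (vz FYs * vw FX) + (- (1%:R * Z) + 1%:R * W) * (vz FYs * vw FY)
  | FYs, FXs => (- (1%:R * Z) + 1%:R * W) * (vz FXs * vw FXs) + (1%:R * Z + 1%:R * W) * (vz FXs * vw FYs) + (- (1%:R * Z) + - (1%:R * W)) * (vz FYs * vw FXs) + (1%:R * Z + - (1%:R * W)) * (vz FYs * vw FYs)
  | FYs, FY => (- (2%:R * Z)) * (vz FY * vw FYs) + (2%:R * Z) * (vz FYs * vw FY)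
  | FYs, FYs => 0
  end.

End Tab.

Arguments Fv : simpl never.
Section Tab2.
Variables (C : numClosedFieldType) (n : nat) (z w : C).
Local Notation M := {mpoly C[n + n]}.

Lemma tab k : (k <= n)%N -> forall t u,
  (2%:R * (z%:MP - w%:MP)) * pb (Fv n k t z) (Fv n k u w) =
  Q t u (Fv n k ^~ z) (Fv n k ^~ w) z%:MP w%:MP.
Proof.
elim: k => [_ t u|k IH hk t u].
  by rewrite !Fv0 pb1l; case: t; case: u; rewrite /Q /= ?Fv0; ring.
have lo := low_Fv (ltnW hk).
have G : (2%:R * (z%:MP - w%:MP)) * pb (Fv n k.+1 t z) (Fv n k.+1 u w) =
   (cA (Ordinal hk) t z).1 * (cA (Ordinal hk) u w).1 * Q (s1 t) (s1 u) (Fv n k ^~ z) (Fv n k ^~ w) z%:MP w%:MP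
 + (cA (Ordinal hk) t z).1 * (cA (Ordinal hk) u w).2 * Q (s1 t) (s2 u) (Fv n k ^~ z) (Fv n k ^~ w) z%:MP w%:MP
 + (cA (Ordinal hk) t z).2 * (cA (Ordinal hk) u w).1 * Q (s2 t) (s1 u) (Fv n k ^~ z) (Fv n k ^~ w) z%:MP w%:MP
 + (cA (Ordinal hk) t z).2 * (cA (Ordinal hk) u w).2 * Q (s2 t) (s2 u) (Fv n k ^~ z) (Fv n k ^~ w) z%:MP w%:MP
 + (2%:R * (z%:MP - w%:MP)) *
   (Fv n k (s1 t) z * Fv n k (s1 u) w * pb (cA (Ordinal hk) t z).1 (cA (Ordinal hk) u w).1
  + Fv n k (s1 t) z * Fv n k (s2 u) w * pb (cA (Ordinal hk) t z).1 (cA (Ordinal hk) u w).2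
  + Fv n k (s2 t) z * Fv n k (s1 u) w * pb (cA (Ordinal hk) t z).2 (cA (Ordinal hk) u w).1
  + Fv n k (s2 t) z * Fv n k (s2 u) w * pb (cA (Ordinal hk) t z).2 (cA (Ordinal hk) u w).2).
  rewrite !(Fv_rec hk); apply: (@pb_step C n (Ordinal hk));
    by [ apply: lo | apply: (proj1 (only_cA _ _ _)) | apply: (proj2 (only_cA _ _ _)) | apply: IH (ltnW hk) _ _ ].
rewrite G; clear G; case: t; case: u; rewrite /Q /= ?(Fv_rec hk) /=;
  rewrite ?(pbNl, pbNr, pbMl, pbMr, pbCl, pbCr, pb1l, pb1r, pb_ab, pb_ba, pb_aa, pb_bb);
  rewrite /rho2; ring.
Qed.

End Tab2.

Lemma pb_ff (C : numClosedFieldType) (n : nat) (f : {mpoly C[n + n]}) : pb f f = 0.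
Proof. rewrite /pb big1 // => j _; ring. Qed.

Lemma unitMP (C : numClosedFieldType) (n : nat) (c : C) : c != 0 ->
  (c^-1)%:MP * (c%:MP : {mpoly C[n + n]}) = 1.
Proof. by move=> h; rewrite -rmorphM mulVf // rmorph1. Qed.

Unset Implicit Arguments.

Theorem theorem13p4 (C : numClosedFieldType) (n : nat) (hn : (0 < n)%N) (z w : C) :
  [/\ pbracket (ev (Phi C n n) z) (ev (Phi C n n) w) = 0,
      pbracket (ev (Psi C n n) z) (ev (Psi C n n) w) = 0,
      pbracket (ev (Phistar C n n) z) (ev (Phistar C n n) w) = 0
    & pbracket (ev (Psistar C n n) z) (ev (Psistar C n n) w) = 0] /\
  (z != w ->
     pbracket (ev (Phistar C n n) z) (ev (Psistar C n n) w) =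
        (- ('i / 2))%:MP *
          (((z + w) / (z - w))%:MP *
             (ev (Phistar C n n) z * ev (Psistar C n n) w
              - ev (Psistar C n n) z * ev (Phistar C n n) w)
           - ev (Phistar C n n) z * ev (Phistar C n n) w
           + ev (Psistar C n n) z * ev (Psistar C n n) w)
     /\
     pbracket (ev (Phi C n n) z) (ev (Psi C n n) w) =
        (- ('i / 2))%:MP *
          (((z + w) / (z - w))%:MP *
             (ev (Phi C n n) z * ev (Psi C n n) w
              - ev (Psi C n n) z * ev (Phi C n n) w)
           + ev (Phi C n n) z * ev (Phi C n n) w
           - ev (Psi C n n) z * ev (Psi C n n) w)).
Proof.
have T := tab z w (leqnn n).
have T1 := T FX FX; have T2 := T FY FY; have T3 := T FXs FXs; have T4 := T FYs FYs.
have T5 := T FXs FYs; have T6 := T FX FY.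
rewrite /Q /Fv /= in T1 T2 T3 T4 T5 T6.
rewrite !pbracketE.
set D := ((z - w)^-1)%:MP : {mpoly C[n + n]}.
set H := ((2 : C)^-1)%:MP : {mpoly C[n + n]}.
have hH : H * 2%:R = 1.
  by rewrite /H (_ : 2%:R = (2 : C)%:MP) ?unitMP ?pnatr_eq0 // rmorph_nat.
have hC : (- ('i / 2))%:MP = - ('i%:MP * H) :> {mpoly C[n + n]}.
  by rewrite rmorphN rmorphM.
have zero (p : {mpoly C[n + n]}) : z != w -> 2%:R * (z%:MP - w%:MP) * p = 0 -> p = 0.
  move=> nzw E.
  have hD : D * (z%:MP - w%:MP) = 1.
    by rewrite -rmorphB unitMP // subr_eq0.
  have -> : p = (H * 2%:R) * (D * (z%:MP - w%:MP)) * p by rewrite hH hD !mul1r.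
  have -> : H * 2%:R * (D * (z%:MP - w%:MP)) * p = H * D * (2%:R * (z%:MP - w%:MP) * p) by ring.
  by rewrite E mulr0.
case: (eqVneq z w) => [<-|nzw].
  by split; [split; rewrite pb_ff mulr0 | move/eqP].
split; first by split; [rewrite (zero _ nzw T1) | rewrite (zero _ nzw T2) | rewrite (zero _ nzw T3) | rewrite (zero _ nzw T4)]; rewrite mulr0.
have hD : D * (z%:MP - w%:MP) = 1.
  by rewrite -rmorphB unitMP // subr_eq0.
have hc : ((z + w) / (z - w))%:MP = (z%:MP + w%:MP) * D :> {mpoly C[n + n]}.
  by rewrite rmorphM rmorphD.
rewrite hC hc.
have P (p q : {mpoly C[n + n]}) : 2%:R * (z%:MP - w%:MP) * p = q -> p = H * D * q.
  move=> <-.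
  have -> : H * D * (2%:R * (z%:MP - w%:MP) * p) = (H * 2%:R) * (D * (z%:MP - w%:MP)) * p by ring.
  by rewrite hH hD !mul1r.
rewrite (P _ _ T5) (P _ _ T6).
split; apply/eqP; rewrite -subr_eq0; apply/eqP.
- set X := 'i%:MP * H * (ev (Phistar C n n) z * ev (Phistar C n n) w
                          - ev (Psistar C n n) z * ev (Psistar C n n) w).
  transitivity ((D * (z%:MP - w%:MP) - 1) * X); last by rewrite hD subrr mul0r.
  rewrite /X; ring.
- set X := 'i%:MP * H * (ev (Psi C n n) z * ev (Psi C n n) w
                          - ev (Phi C n n) z * ev (Phi C n n) w).
  transitivity ((D * (z%:MP - w%:MP) - 1) * X); last by rewrite hD subrr mul0r.
  rewrite /X; ring.
Qed.
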